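(* In the setting described in the context, suppose there exist $\hat{i}\in I$ and $j\in J_{\hat{i}}$ with $\hat{x}_j\neq0$. Then RLO-IU-SD is feasible if and only if $\sum_{j\in J}a_{ij}\hat{x}_j\ge b_i$ for all $i\in I$.
   Context: Let $I=\{1,\dots,m\}$, $J=\{1,\dots,n\}$. Given are $a_{ij}\in\mathbb{R}$, $b\in\mathbb{R}^m$, nonempty index sets $J_i\subseteq J$ ($i\in I$), an observed point $\hat{x}\in\mathbb{R}^n$, prior vectors $\hat{\alpha}_i\in\mathbb{R}^{|J_i|}$, real weights $\xi_i$ ($i\in I$), and a norm $\|\cdot\|$. The problem RLO-IU-SD is \[ \min_{\alpha,c,u,\pi,\lambda,\mu}\ \sum_{i\in I}\xi_i\|\alpha_i-\hat{\alpha}_i\| \] subject to: $\sum_{j\in J}c_j\hat{x}_j-\sum_{i\in I}b_i\pi_i=0$; $\alpha_{ij}\hat{x}_j+u_{ij}\ge0$ and $-\alpha_{ij}\hat{x}_j+u_{ij}\ge0$ for all $j\in J_i,i\in I$; $\sum_{j\in J}a_{ij}\hat{x}_j-\sum_{j\in J_i}u_{ij}\ge b_i$ for all $i\in I$; $\alpha_{ij}\ge0$ for all $j\in J_i,i\in I$; $\sum_{i\in I}\pi_i=1$; $\sum_{i\in I}a_{ij}\pi_i+\sum_{i\in I:j\in J_i}\alpha_{ij}(\lambda_{ij}-\mu_{ij})=c_j$ for all $j\in J$; $\pi_i=\lambda_{ij}+\mu_{ij}$ for all $j\in J_i,i\in I$; $\pi_i,\lambda_{ij},\mu_{ij}\ge0$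 for all $j\in J_i,i\in I$. Here $\alpha_i=(\alpha_{ij})_{j\in J_i}$, $c\in\mathbb{R}^n$, $\pi\in\mathbb{R}^m$. *)

(* Defs.v *)
From mathcomp Require Import all_boot all_order all_algebra.
From mathcomp Require Import reals.
Set Implicit Arguments. Unset Strict Implicit. Unset Printing Implicit Defensive.
Import Order.TTheory GRing.Theory Num.Theory.
Local Open Scope ring_scope.

(* I = 'I_m, J = 'I_n, J_i = Js i : {set 'I_n}.
   Variables alpha_ij, u_ij, lambda_ij, mu_ij (j in J_i) are represented by
   functions 'I_m -> 'I_n -> R, of which only the entries with j \in Js i
   are constrained / meaningful. *)

Definition RLO_IU_SD_constraints (R : realType) (m n : nat)
    (a : 'I_m -> 'I_n -> R) (b : 'I_m -> R) (Js : 'I_m -> {set 'I_n})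
    (xhat : 'I_n -> R)
    (alpha : 'I_m -> 'I_n -> R) (c : 'I_n -> R) (u : 'I_m -> 'I_n -> R)
    (pi : 'I_m -> R) (lambda mu : 'I_m -> 'I_n -> R) : Prop :=
  (\sum_(j < n) c j * xhat j - \sum_(i < m) b i * pi i = 0) /\
      (forall i j, j \in Js i -> alpha i j * xhat j + u i j >= 0) /\
      (forall i j, j \in Js i -> - (alpha i j * xhat j) + u i j >= 0) /\
      (forall i, \sum_(j < n) a i j * xhat j - \sum_(j in Js i) u i j >= b i) /\
      (forall i j, j \in Js i -> alpha i j >= 0) /\
      \sum_(i < m) pi i = 1 /\
      (forall j, \sum_(i < m) a i j * pi i
                 + \sum_(i < m | j \in Js i) alpha i j * (lambda i j - mu i j)
                 = c j) /\
      (forall i j, j \in Js i -> pi i = lambda i j + mu i j) /\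
      (forall i, pi i >= 0) /\
      (forall i j, j \in Js i -> lambda i j >= 0 /\ mu i j >= 0).

Definition RLO_IU_SD_feasible (R : realType) (m n : nat)
    (a : 'I_m -> 'I_n -> R) (b : 'I_m -> R) (Js : 'I_m -> {set 'I_n})
    (xhat : 'I_n -> R) : Prop :=
  exists alpha c u pi lambda mu,
    RLO_IU_SD_constraints a b Js xhat alpha c u pi lambda mu.

(* Main.v *)
Require Import Defs.
From mathcomp Require Import all_boot all_order all_algebra.
From mathcomp Require Import reals.
From mathcomp Require Import ring lra.
Import Order.TTheory GRing.Theory Num.Theory.
Local Open Scope ring_scope.

Lemma sum_ind1 (R : realType) m (k : 'I_m) (F : 'I_m -> R) :
  \sum_(i < m) (i == k)%:R * F i = F k.
Proof.
rewrite (bigD1 k) //= eqxx mul1r big1 ?addr0 // => i /negbTE ->; by rewrite mul0r.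
Qed.

Lemma sum_ind1r (R : realType) m (k : 'I_m) (F : 'I_m -> R) :
  \sum_(i < m) F i * (i == k)%:R = F k.
Proof.
rewrite (bigD1 k) //= eqxx mulr1 big1 ?addr0 // => i /negbTE ->; by rewrite mulr0.
Qed.

Theorem proposition3 (R : realType) (m n : nat)
    (a : 'I_m -> 'I_n -> R) (b : 'I_m -> R) (Js : 'I_m -> {set 'I_n})
    (xhat : 'I_n -> R)
    (hJs : forall i, Js i != set0)
    (hx : exists (ihat : 'I_m) (j : 'I_n), j \in Js ihat /\ xhat j != 0) :
  RLO_IU_SD_feasible a b Js xhat <->
  (forall i : 'I_m, \sum_(j < n) a i j * xhat j >= b i).
Proof.
split.
  move=> [al [c [u [pi [la [mu [_ [h2 [h3 [h4 _]]]]]]]]]] i.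
  apply: le_trans (h4 i) _.
  rewrite lerBlDr lerDl; apply: sumr_ge0 => j jJ.
  have := h2 i j jJ; have := h3 i j jJ; lra.
move=> H.
case: hx => ih [j0 [j0J xj0]].
set s := \sum_(j < n) a ih j * xhat j - b ih.
have s0 : 0 <= s by rewrite subr_ge0.
set d : R := if 0 < xhat j0 then -1 else 1.
have ax : 0 < `|xhat j0| by rewrite normr_gt0.
have dx : d / `|xhat j0| * xhat j0 = -1.
  rewrite /d; case: ifP => hp.
    by rewrite gtr0_norm // mulN1r mulNr mulVf.
  have hn : xhat j0 < 0 by rewrite lt_neqAle xj0 /= leNgt hp.
  rewrite ltr0_norm // mul1r invrN mulNr mulVf //.
have d1 : -1 <= d <= 1 by rewrite /d; case: ifP => _; apply/andP; lra.
pose pi (i : 'I_m) : R := (i == ih)%:R.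
pose al (i : 'I_m) (j : 'I_n) : R := ((i == ih) && (j == j0))%:R * (s / `|xhat j0|).
pose u (i : 'I_m) (j : 'I_n) : R := al i j * `|xhat j|.
pose la (i : 'I_m) (j : 'I_n) : R := pi i * ((1 + d) / 2).
pose mu (i : 'I_m) (j : 'I_n) : R := pi i * ((1 - d) / 2).
pose c j : R := a ih j + (j == j0)%:R * (s * (d / `|xhat j0|)).
have alpos i j : 0 <= al i j.
  rewrite /al; apply: mulr_ge0; first by case: (_ && _).
  by apply: divr_ge0.
exists al, c, u, pi, la, mu.
split.
  rewrite /c.
  under eq_bigr => j _ do rewrite mulrDl.
  rewrite big_split /=.
  under [X in _ + X - _]eq_bigr => i _ do rewrite -mulrA.
  rewrite (@sum_ind1 R _ j0 (fun i => s * (d / `|xhat j0|) * xhat i)) /pi.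
  rewrite (@sum_ind1r R _ ih b) -[s * _ * xhat j0]mulrA dx.
  rewrite /s; lra.
have pi0 i : 0 <= pi i by rewrite /pi; case: (_ == _).
split.
  move=> i j _; rewrite /u -mulrDr; apply: mulr_ge0 => //.
  have := ler_norm (- xhat j); have := ler_norm (xhat j); rewrite normrN; lra.
split.
  move=> i j _; rewrite /u -mulrN -mulrDr; apply: mulr_ge0 => //.
  have := ler_norm (- xhat j); have := ler_norm (xhat j); rewrite normrN; lra.
split.
  move=> i; case: (eqVneq i ih) => [->|ne].
    rewrite [\sum_(j in Js ih) _](bigD1 j0) //= [X in u ih j0 + X]big1 => [|j /andP[_ ne]]; last first.
      by rewrite /u /al (negbTE ne) andbF !mul0r.
    rewrite addr0 /u /al !eqxx /= mul1r divfK; last by rewrite normr_eq0.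
    rewrite /s; lra.
  rewrite [\sum_(j in Js i) _]big1 => [|j _]; last by rewrite /u /al (negbTE ne) /= !mul0r.
  rewrite subr0; exact: H.
split; first by move=> i j _; apply: alpos.
split.
  rewrite /pi (bigD1 ih) //= eqxx big1 ?addr0 // => i /negbTE ->. by [].
split.
  move=> j; rewrite (@sum_ind1r R _ ih (a^~ j)) /c.
  case: (eqVneq j j0) => [->|ne].
    rewrite (bigD1 ih) //= big1 => [|i /andP[_ ne]]; last first.
      by rewrite /al (negbTE ne) /= !mul0r.
    rewrite addr0 /al /la /mu /pi !eqxx /=.
    field; by rewrite normr_eq0.
  rewrite big1 => [|i _]; last by rewrite /al (negbTE ne) andbF /= !mul0r.
  by rewrite mul0r.
split; first by move=> i j _; rewrite /la /mu; field.
split; first exact: pi0.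
move=> i j _; split; apply: mulr_ge0 => //; apply: divr_ge0; lra.
Qed.
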